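(* Let $\mathfrak R$ be either the Sierpiński gasket iterated graph system or the pentagonal Sierpiński carpet iterated graph system, with replacement graphs $G_m$, and let $n\in\mathbb N$. For every $\tilde w\in W_\#$ there is a folding of $G_{n+|\tilde w|}$ onto $\tilde w\cdot W_n:=\{\tilde w u:u\in W_n\}$.
   Context: Graphs: $(V,E)$ with $V$ finite non-empty, $E\subseteq V\times V$, $(x,y)\in E\Rightarrow(y,x)\notin E$; $\{x,y\}\in E$ means either orientation. A mapping between graphs $\varphi:G\to G'$ maps vertices so that each edge $\{x,y\}$ has $\varphi(x)=\varphi(y)$ or $\{\varphi(x),\varphi(y)\}\in E(G')$. A folding of $G$ onto $U\subseteq V(G)$ is a mapping between graphs $\varphi:G\to\langle U\rangle$ (induced subgraph) with $\varphi|_U=\mathrm{id}_U$. An iterated graph system consists of a connected graph $G_1=(S,E)$, a finite set $\mathcal T$ of types, a surjective typing $\mathfrak t:E\to\mathcal T$ and gluing rules $I_t\subseteq S\times S$. With $W_m=S^m$, $W_\#=\bigcup_{m\ge1}W_m$, $[w]_k=w_1\cdots w_k$, the replacement graphs $G_m=(W_m,E_m)$ are defined recursively: $(w,v)\in E_{m+1}$ iff either (1) $[w]_m=[v]_m$ and $(w_{m+1},v_{m+1})\in E$ (type $\mathfrak t(w_{m+1},v_{m+1})$), or (2) $([w]_m,[v]_m)\in E_m$ and $(w_{m+1},v_{m+1})\in I_{\mathfrak t([w]_m,[v]_m)}$ (type $\mathfrak t([w]_m,[v]_m)$). Sierpiński gasket: $S=\{0,1,2\}$, $E=\{(0,1),(1,2),(0,2)\}$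 with types $a,b,c$ respectively, $I_a=\{(1,0)\}$, $I_b=\{(2,1)\}$, $I_c=\{(2,0)\}$. Pentagonal Sierpiński carpet: $S=\{0,1,2,3,4\}$, $E=\{(0,1),(1,2),(2,3),(3,4),(4,0)\}$ with types $a,b,c,d,e$ respectively, $I_a=\{(1,0),(2,4)\}$, $I_b=\{(2,1),(3,0)\}$, $I_c=\{(3,2),(4,1)\}$, $I_d=\{(4,3),(0,2)\}$, $I_e=\{(0,4),(1,3)\}$. *)

(* Defs.v *)
From mathcomp Require Import all_boot.
Set Implicit Arguments. Unset Strict Implicit. Unset Printing Implicit Defensive.

(* A graph: a finite vertex type and a (directed) edge relation; {x,y} in E
   means either orientation. *)
Record graph := Graph { vert : finType; edge : rel vert }.
Arguments edge g _ _ : clear implicits.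

Definition uedge (G : graph) (x y : vert G) : bool := edge G x y || edge G y x.

Definition induced (G : graph) (U : {set vert G}) : graph :=
  @Graph {x : vert G | x \in U} (fun x y => edge G (val x) (val y)).

Definition is_mapping (G G' : graph) (phi : vert G -> vert G') : Prop :=
  forall x y : vert G, edge G x y -> phi x = phi y \/ uedge (phi x) (phi y).

Definition is_folding (G : graph) (U : {set vert G})
    (phi : vert G -> vert (induced U)) : Prop :=
  is_mapping phi /\ forall x : vert (induced U), phi (val x) = x.

(* S = 'I_k, edges E : rel 'I_k, types T, typing typ (only relevant on edges),
   gluing rules I_t. *)
Record igs := IGS {
  igs_k : nat;
  igs_E : rel 'I_igs_k;
  igs_T : finType;
  igs_typ : 'I_igs_k -> 'I_igs_k -> igs_T;
  igs_I : igs_T -> rel 'I_igs_k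
}.
Arguments igs_E i _ _ : clear implicits.
Arguments igs_typ i _ _ : clear implicits.
Arguments igs_I i _ _ _ : clear implicits.

(* Edge type of (w,v) in the replacement graph, computed on REVERSED words
   (head = last letter); None means "not an edge".  Clause (1): equal prefixes
   and last letters form an edge of G_1; clause (2): prefixes form an edge of
   type t and the last letters are in I_t. *)
Fixpoint etype_rev (R : igs) (w v : seq 'I_(igs_k R)) : option (igs_T R) :=
  match w, v with
  | a :: w', b :: v' =>
      if w' == v' then
        (if igs_E R a b then Some (igs_typ R a b) else None)
      else
        match etype_rev w' v' with
        | Some t => if igs_I R t a b then Some t else None
        | None => None
        end
  | _, _ => None
  end.

Definition etype (R : igs) (w v : seq 'I_(igs_k R)) : option (igs_T R) :=
  etype_rev (rev w) (rev v).

Definition Gm (R : igs) (m : nat) : graph :=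
  @Graph (m.-tuple 'I_(igs_k R))
         (fun w v => etype (val w) (val v) != None).

Definition prefix_set (R : igs) (N m n : nat) (wt : m.-tuple 'I_(igs_k R))
  : {set vert (Gm R N)} :=
  [set x : N.-tuple 'I_(igs_k R) |
     [exists u : n.-tuple 'I_(igs_k R), val x == val wt ++ val u]].

(* Sierpinski gasket: S={0,1,2}, E={(0,1),(1,2),(0,2)} with types a=0,b=1,c=2 *)
Definition gasket_E (x y : 'I_3) : bool :=
  [|| (val x == 0) && (val y == 1), (val x == 1) && (val y == 2)
    | (val x == 0) && (val y == 2)].
Definition gasket_typ (x y : 'I_3) : 'I_3 :=
  if (val x == 0) && (val y == 2) then inord 2 else x.
Definition gasket_I (t : 'I_3) (x y : 'I_3) : bool :=
  match val t with
  | 0 => (val x == 1) && (val y == 0)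
  | 1 => (val x == 2) && (val y == 1)
  | _ => (val x == 2) && (val y == 0)
  end.
Definition gasket : igs := @IGS 3 gasket_E 'I_3 gasket_typ gasket_I.

(* Pentagonal carpet: S={0..4}, E={(i,i+1 mod 5)}, type of (i,i+1) is i
   (a..e = 0..4), I_t = {(t+1,t),(t+2,t+4)} (indices mod 5). *)
Definition carpet_E (x y : 'I_5) : bool := val y == (val x + 1) %% 5.
Definition carpet_typ (x y : 'I_5) : 'I_5 := x.
Definition carpet_I (t : 'I_5) (x y : 'I_5) : bool :=
  ((val x == (val t + 1) %% 5) && (val y == val t))
  || ((val x == (val t + 2) %% 5) && (val y == (val t + 4) %% 5)).
Definition carpet : igs := @IGS 5 carpet_E 'I_5 carpet_typ carpet_I.

(* Main.v *)
Require Import Defs.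
From mathcomp Require Import all_boot.
Set Implicit Arguments. Unset Strict Implicit. Unset Printing Implicit Defensive.

Lemma etype_rev_nil_r (R : igs) (w : seq 'I_(igs_k R)) : etype_rev w [::] = None.
Proof. by case: w. Qed.

Lemma G1r (R : igs) (s : 'I_(igs_k R)) (Hs : ~~ igs_E R s s) w v :
  etype_rev (rcons w s) (rcons v s) = etype_rev w v.
Proof.
elim: w v => [|c w IH] [|d v] /=.
- by rewrite (negbTE Hs).
- by case: v.
- by rewrite etype_rev_nil_r; case: w {IH}.
- by rewrite eqseq_rcons eqxx andbT IH.
Qed.

Lemma G2r (R : igs) (a b : 'I_(igs_k R)) (Hab : a != b) w v :
  etype_rev (rcons w a) (rcons v b) =
  if igs_E R a b && all2 (igs_I R (igs_typ R a b)) w v then Some (igs_typ R a b) else None.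
Proof.
elim: w v => [|c w IH] [|d v] /=.
- by rewrite andbT.
- by case: v; rewrite andbF.
- by rewrite etype_rev_nil_r andbF; case: w {IH}.
- rewrite eqseq_rcons (negbTE Hab) andbF IH.
  by case: (igs_E R a b) => //=; case: (all2 _ w v); case: (igs_I _ _ c d).
Qed.

Lemma all2_rcons (A B : Type) (r : A -> B -> bool) s t x y :
  all2 r (rcons s x) (rcons t y) = all2 r s t && r x y.
Proof.
elim: s t => [|a s IH] [|b t] //=.
- by rewrite andbT.
- by case: t => [|? ?]; rewrite /= !andbF.
- by case: s {IH} => [|? ?]; rewrite /= !andbF.
by rewrite IH andbA.
Qed.

Lemma all2_rev (A B : Type) (r : A -> B -> bool) u v :
  all2 r (rev u) (rev v) = all2 r u v.
Proof.
elim: u v => [|c u IH] [|d v] //=.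
- by rewrite rev_cons; case: (rev v).
- by rewrite rev_cons; case: (rev u).
by rewrite !rev_cons all2_rcons IH andbC.
Qed.

Lemma G1 (R : igs) (s : 'I_(igs_k R)) (Hs : ~~ igs_E R s s) u v :
  etype (s :: u) (s :: v) = etype u v.
Proof. by rewrite /etype !rev_cons G1r. Qed.

Lemma G2 (R : igs) (a b : 'I_(igs_k R)) (Hab : a != b) u v :
  etype (a :: u) (b :: v) =
  if igs_E R a b && all2 (igs_I R (igs_typ R a b)) u v then Some (igs_typ R a b) else None.
Proof. rewrite /etype !rev_cons G2r //. have := all2_rev (igs_I R (igs_typ R a b)) u v. move=> ->. by []. Qed.

Lemma etype_nil_l (R : igs) (v : seq 'I_(igs_k R)) : etype [::] v = None.
Proof. by []. Qed.
Lemma etype_nil_r (R : igs) (v : seq 'I_(igs_k R)) : etype v [::] = None.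
Proof. by rewrite /etype etype_rev_nil_r. Qed.

Definition adj (R : igs) (u v : seq 'I_(igs_k R)) : bool :=
  (etype u v != None) || (etype v u != None).
Definition adjeq (R : igs) (u v : seq 'I_(igs_k R)) : bool := (u == v) || adj u v.
Definition mapping (R : igs) (f : seq 'I_(igs_k R) -> seq 'I_(igs_k R)) : Prop :=
  forall u v, adj u v -> adjeq (f u) (f v).
Fixpoint ords (k : nat) : seq 'I_k :=
  match k with 0 => [::] | k'.+1 => ord0 :: map (lift ord0) (ords k') end.
Lemma mem_ords (k : nat) (x : 'I_k) : x \in ords k.
Proof.
elim: k x => [|k IH] x; first by case: x.
rewrite /= inE; case: (unliftP ord0 x) => [j ->|->]; last by rewrite eqxx.
by rewrite mem_map ?IH ?orbT //; exact: lift_inj.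
Qed.
Definition fa (k : nat) (P : pred 'I_k) : bool := all P (ords k).
Lemma faP (k : nat) (P : pred 'I_k) : fa P -> forall x, P x.
Proof. by move=> H x; apply: (allP H); exact: mem_ords. Qed.
Definition irrefl (R : igs) : bool := fa (fun a => ~~ igs_E R a a).

Lemma adjC (R : igs) (u v : seq 'I_(igs_k R)) : adj u v = adj v u.
Proof. by rewrite /adj orbC. Qed.
Lemma adjeqC (R : igs) (u v : seq 'I_(igs_k R)) : adjeq u v = adjeq v u.
Proof. by rewrite /adjeq adjC eq_sym. Qed.

Lemma adj_cons (R : igs) (HR : irrefl R) s (u v : seq 'I_(igs_k R)) :
  adj (s :: u) (s :: v) = adj u v.
Proof. by rewrite /adj !G1 //; apply: (faP HR). Qed.
Lemma adjeq_cons (R : igs) (HR : irrefl R) s (u v : seq 'I_(igs_k R)) :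
  adjeq (s :: u) (s :: v) = adjeq u v.
Proof. by rewrite /adjeq adj_cons // eqseq_cons eqxx. Qed.

Lemma mapping_oriented (R : igs) f :
  (forall u v : seq 'I_(igs_k R), etype u v != None -> adjeq (f u) (f v)) -> mapping f.
Proof.
move=> H u v /orP [/H //|/H]; by rewrite adjeqC.
Qed.

Lemma mapping_comp (R : igs) (f g : seq 'I_(igs_k R) -> seq 'I_(igs_k R)) :
  mapping f -> mapping g -> mapping (fun x => g (f x)).
Proof.
move=> Hf Hg u v /Hf /orP [/eqP ->|/Hg //]; by rewrite /adjeq eqxx.
Qed.

Lemma mapping_id (R : igs) : mapping (fun x : seq 'I_(igs_k R) => x).
Proof. by move=> u v H; rewrite /adjeq H orbT. Qed.

Definition good (R : igs) (p : 'I_(igs_k R) -> 'I_(igs_k R)) : bool :=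
  fa (fun a => fa (fun b => igs_E R a b ==>
    (((p a == p b) && fa (fun c => fa (fun d => igs_I R (igs_typ R a b) c d ==> (p c == p d))))
  || (igs_E R (p a) (p b) && fa (fun c => fa (fun d => igs_I R (igs_typ R a b) c d ==>
         igs_I R (igs_typ R (p a) (p b)) (p c) (p d))))
  || (igs_E R (p b) (p a) && fa (fun c => fa (fun d => igs_I R (igs_typ R a b) c d ==>
         igs_I R (igs_typ R (p b) (p a)) (p d) (p c))))))).

Lemma all2_map (A B C D : Type) (r : A -> B -> bool) (r' : C -> D -> bool) f g u v :
  all2 r u v -> (forall x y, r x y -> r' (f x) (g y)) -> all2 r' (map f u) (map g v).
Proof.
move=> H Hr; elim: u v H => [|x u IH] [|y v] //= /andP [H1 H2].
by rewrite Hr // IH.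
Qed.

Lemma all2_map_swap (A B C D : Type) (r : A -> B -> bool) (r' : D -> C -> bool) f g u v :
  all2 r u v -> (forall x y, r x y -> r' (g y) (f x)) -> all2 r' (map g v) (map f u).
Proof.
move=> H Hr; elim: u v H => [|x u IH] [|y v] //= /andP [H1 H2].
by rewrite Hr // IH.
Qed.

Lemma all2_map_eq (A B C : Type) (r : A -> B -> bool) (f : A -> C) (g : B -> C) u v :
  all2 r u v -> (forall x y, r x y -> f x = g y) -> map f u = map g v.
Proof.
move=> H Hr; elim: u v H => [|x u IH] [|y v] //= /andP [H1 H2].
by rewrite (Hr _ _ H1) (IH _ H2).
Qed.

Lemma all2_allL (A B : Type) (r : A -> B -> bool) (P : pred A) u v :
  all2 r u v -> (forall x y, r x y -> P x) -> all P u.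
Proof.
move=> H Hr; elim: u v H => [|x u IH] [|y v] //= /andP [H1 H2].
by rewrite (Hr _ _ H1) (IH _ H2).
Qed.

Lemma all2_allR (A B : Type) (r : A -> B -> bool) (P : pred B) u v :
  all2 r u v -> (forall x y, r x y -> P y) -> all P v.
Proof.
move=> H Hr; elim: u v H => [|x u IH] [|y v] //= /andP [H1 H2].
by rewrite (Hr _ _ H1) (IH _ H2).
Qed.

Lemma ne_map (A B : eqType) (f : A -> B) a b : f a != f b -> a != b.
Proof. by apply: contra => /eqP ->. Qed.

Lemma good_mapping (R : igs) (HR : irrefl R) p : good p -> mapping (R := R) (map p).
Proof.
move=> Hg; apply: mapping_oriented.
elim=> [|a u IH] [|b v] //=; rewrite ?etype_nil_r ?eqxx //.
have [<-|Hab] := eqVneq a b.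
  rewrite G1; last by apply: (faP HR).
  by move/(fun h => IH _ h); rewrite adjeq_cons.
rewrite G2 //; case: ifP => // /andP [HE HI] _.
move: (faP (faP Hg a) b); rewrite HE /= => /orP [/orP [H1|H1]|H1]; move: H1 => /andP [H0 H].
- rewrite /adjeq (eqP H0) (all2_map_eq (g := p) HI) ?eqxx //.
  by move=> x y Hxy; apply/eqP; move: (faP (faP H x) y); rewrite Hxy.
- have Hne : p a != p b by apply: contraTneq H0 => ->; apply: (faP HR).
  apply/orP; right; apply/orP; left; rewrite G2 // H0 /=.
  rewrite (all2_map HI) //.
  by move=> x y Hxy; move: (faP (faP H x) y); rewrite Hxy.
- have Hne : p b != p a by apply: contraTneq H0 => ->; apply: (faP HR).
  apply/orP; right; apply/orP; right; rewrite G2 // H0 /=.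
  rewrite (all2_map_swap HI) //.
  by move=> x y Hxy; move: (faP (faP H x) y); rewrite Hxy.
Qed.

Lemma adj_nil_l (R : igs) (v : seq 'I_(igs_k R)) : adj [::] v = false.
Proof. by rewrite /adj etype_nil_l etype_nil_r. Qed.
Lemma adj_nil_r (R : igs) (v : seq 'I_(igs_k R)) : adj v [::] = false.
Proof. by rewrite adjC adj_nil_l. Qed.

Definition cross (R : igs) (psi : 'I_(igs_k R) -> seq 'I_(igs_k R) -> seq 'I_(igs_k R)) :=
  forall a b u v, igs_E R a b -> all2 (igs_I R (igs_typ R a b)) u v ->
    adjeq (psi a u) (psi b v).

Lemma fold1_mapping (R : igs) (HR : irrefl R) (psi : 'I_(igs_k R) -> seq 'I_(igs_k R) -> seq 'I_(igs_k R)) :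
  (forall a, mapping (psi a)) -> cross psi ->
  forall a b u v, adj (a :: u) (b :: v) -> adjeq (psi a u) (psi b v).
Proof.
move=> Hm Hc.
suff H : forall a b u v, etype (a :: u) (b :: v) != None -> adjeq (psi a u) (psi b v).
  by move=> a b u v /orP [/H //|/H]; rewrite adjeqC.
move=> a b u v.
have [<-|Hab] := eqVneq a b.
  rewrite G1; last by apply: (faP HR).
  by move=> H; apply: Hm; rewrite /adj H.
rewrite G2 //; case: ifP => // /andP [HE HI] _.
exact: Hc.
Qed.

Fixpoint Fold (R : igs) (psi : 'I_(igs_k R) -> 'I_(igs_k R) -> seq 'I_(igs_k R) -> seq 'I_(igs_k R))
  (wt x : seq 'I_(igs_k R)) : seq 'I_(igs_k R) :=
  match wt, x with
  | s :: wt', a :: u => s :: Fold psi wt' (psi s a u)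
  | _, _ => x
  end.

Lemma Fold_mapping (R : igs) (HR : irrefl R) (psi : 'I_(igs_k R) -> 'I_(igs_k R) -> seq 'I_(igs_k R) -> seq 'I_(igs_k R)) :
  (forall s a, mapping (psi s a)) -> (forall s, cross (psi s)) ->
  forall wt, mapping (Fold psi wt).
Proof.
move=> Hm Hc; elim=> [|s wt IH] u v.
  by case: u => [|? ?]; case: v => [|? ?] H; rewrite /adjeq H orbT.
case: u => [|a u]; first by rewrite adj_nil_l.
case: v => [|b v]; first by rewrite adj_nil_r.
move=> H /=; case/orP: (fold1_mapping HR (Hm s) (Hc s) H) => [/eqP ->|/IH H'].
  by rewrite /adjeq eqxx.
by rewrite adjeq_cons.
Qed.

Lemma Fold_size (R : igs) (psi : 'I_(igs_k R) -> 'I_(igs_k R) -> seq 'I_(igs_k R) -> seq 'I_(igs_k R)) :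
  (forall s a (u : seq 'I_(igs_k R)), size (psi s a u) = size u) ->
  forall wt x, size (Fold psi wt x) = size x.
Proof.
move=> Hs; elim=> [|s wt IH] [|a u] //=.
by rewrite IH Hs.
Qed.

Lemma Fold_id (R : igs) (psi : 'I_(igs_k R) -> 'I_(igs_k R) -> seq 'I_(igs_k R) -> seq 'I_(igs_k R)) :
  (forall s (u : seq 'I_(igs_k R)), psi s s u = u) ->
  forall wt u, Fold psi wt (wt ++ u) = wt ++ u.
Proof.
move=> Hi; elim=> [|s wt IH] u /=; first by case: u.
by rewrite Hi IH.
Qed.

Lemma Fold_prefix (R : igs) (psi : 'I_(igs_k R) -> 'I_(igs_k R) -> seq 'I_(igs_k R) -> seq 'I_(igs_k R)) :
  (forall s a (u : seq 'I_(igs_k R)), size (psi s a u) = size u) ->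
  forall wt x, size wt <= size x -> Fold psi wt x = wt ++ drop (size wt) (Fold psi wt x).
Proof.
move=> Hs; elim=> [|s wt IH] [|a u] //=; rewrite ?drop0 //.
move=> Hle; rewrite -IH //.
by rewrite Hs.
Qed.

Lemma main_generic (R : igs) (HR : irrefl R)
  (psi : 'I_(igs_k R) -> 'I_(igs_k R) -> seq 'I_(igs_k R) -> seq 'I_(igs_k R))
  (Hm : forall s a, mapping (psi s a)) (Hc : forall s, cross (psi s))
  (Hs : forall s a u, size (psi s a u) = size u) (Hi : forall s u, psi s s u = u)
  (n m : nat) (wt : m.-tuple 'I_(igs_k R)) :
  exists phi : vert (Gm R (n + m)) -> vert (induced (prefix_set (n + m) n wt)),
    is_folding phi.
Proof.
have sizeF (x : vert (Gm R (n + m))) : size (Fold psi wt (val x)) == n + m.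
  by rewrite Fold_size // size_tuple.
have sizeD (x : vert (Gm R (n + m))) : size (drop m (Fold psi wt (val x))) == n.
  by rewrite size_drop (eqP (sizeF x)) addnK.
have memF (x : vert (Gm R (n + m))) :
    (Tuple (sizeF x) : vert (Gm R (n + m))) \in prefix_set (n + m) n wt.
  rewrite inE; apply/existsP; exists (Tuple (sizeD x)) => /=.
  rewrite {1}(@Fold_prefix R psi Hs wt (val x)); last by rewrite !size_tuple leq_addl.
  by rewrite size_tuple.
exists (fun x => exist _ (Tuple (sizeF x)) (memF x)); split.
  move=> x y Hxy.
  have Hadj : adj (val x) (val y) by rewrite /adj; move: Hxy => /= ->.
  case/orP: (Fold_mapping HR Hm Hc wt Hadj) => [/eqP Heq|/orP H].
    by left; apply: val_inj; apply: val_inj.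
  by right; apply/orP.
case=> z Hz; apply: val_inj; apply: val_inj => /=.
move: Hz; rewrite inE => /existsP [u /eqP Hu].
by rewrite Hu Fold_id.
Qed.


Definition gadd (s a c : 'I_3) : 'I_3 := Ordinal (ltn_pmod (c + a + 3 - s) (isT : 0 < 3)).

Lemma inord2E : inord 2 = Ordinal (isT : 2 < 3).
Proof. by apply: val_inj; rewrite /= inordK. Qed.

Lemma gasket_irrefl : irrefl gasket.
Proof. by vm_compute. Qed.

Lemma gasket_good : fa (fun s => fa (fun a => good (R := gasket) (gadd s a))).
Proof. rewrite /good /= /gasket_typ inord2E. Time by vm_compute. Qed.

Lemma gasket_cross_chk : fa (fun s => fa (fun a : 'I_3 => fa (fun b : 'I_3 => igs_E gasket a b ==>
  fa (fun c => fa (fun d => igs_I gasket (igs_typ gasket a b) c d ==> (gadd s a c == gadd s b d)))))).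
Proof. rewrite /= /gasket_typ inord2E. Time by vm_compute. Qed.

Lemma gasket_id_chk : fa (fun s => fa (fun c => gadd s s c == c)).
Proof. by vm_compute. Qed.

Lemma gasket_main (n m : nat) (wt : m.-tuple 'I_(igs_k gasket)) :
  exists phi : vert (Gm gasket (n + m)) -> vert (induced (prefix_set (n + m) n wt)),
    is_folding phi.
Proof.
apply: (@main_generic gasket gasket_irrefl (fun s a u => map (gadd s a) u)).
- move=> s a; apply: good_mapping; first exact: gasket_irrefl.
  exact: (faP (faP gasket_good s) a).
- move=> s a b u v HE HI.
  rewrite /adjeq (all2_map_eq (f := gadd s a) (g := gadd s b) HI) ?eqxx //.
  move=> c d Hcd; apply/eqP.
  move: (faP (faP (faP gasket_cross_chk s) a) b); rewrite HE /= => H.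
  by move: (faP (faP H c) d) => /implyP; apply.
- by move=> s a u; rewrite size_map.
- move=> s u; rewrite -[RHS]map_id; apply: eq_map => c.
  exact/eqP/(faP (faP gasket_id_chk s) c).
Qed.


Definition cadd (k c : 'I_5) : 'I_5 := Ordinal (ltn_pmod (c + k) (isT : 0 < 5)).
Definition cneg (k : nat) (c : 'I_5) : 'I_5 := Ordinal (ltn_pmod (k + 5 - c) (isT : 0 < 5)).
Definition cinv (k : 'I_5) : 'I_5 := Ordinal (ltn_pmod (5 - k) (isT : 0 < 5)).
Definition tau := cneg 0.

Fixpoint sideR (x : seq 'I_5) : bool :=
  match x with [::] => false | c :: x' => if val c == 0 then sideR x' else 3 <= val c end.
Definition Hf (x : seq 'I_5) : seq 'I_5 := if sideR x then map tau x else x.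

Lemma carpet_irrefl : irrefl carpet.
Proof. by vm_compute. Qed.

Lemma tau_good : good (R := carpet) tau.
Proof. by vm_compute. Qed.

Lemma tau_map_mapping : mapping (R := carpet) (map tau).
Proof. exact: (@good_mapping carpet carpet_irrefl tau tau_good). Qed.

Lemma tauK_chk : fa (fun c => tau (tau c) == c).
Proof. by vm_compute. Qed.

Lemma tauK (x : seq 'I_5) : map tau (map tau x) = x.
Proof.
rewrite -map_comp -[RHS]map_id; apply: eq_map => c /=.
exact/eqP/(faP tauK_chk).
Qed.

Lemma Hf_cases x : Hf x = x \/ Hf x = map tau x.
Proof. by rewrite /Hf; case: ifP; [right|left]. Qed.

Lemma sideR_low (x : seq 'I_5) : all (fun c : 'I_5 => val c <= 2) x -> sideR x = false.
Proof.
elim: x => [|c x IH] //= /andP [Hc Hx].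
by case: ifP => _; [exact: IH | case: (val c) Hc => [|[|[|[|?]]]]].
Qed.

Lemma Hfix x : all (fun c : 'I_5 => val c <= 2) x -> Hf x = x.
Proof. by move=> H; rewrite /Hf sideR_low. Qed.

Lemma tau0 (c : 'I_5) : val c = 0 -> tau c = c.
Proof. by move=> H; apply: val_inj; rewrite /= H. Qed.

Lemma Htau x : all (fun c : 'I_5 => (val c == 0) || (3 <= val c)) x -> Hf x = map tau x.
Proof.
rewrite /Hf; case: ifP => // HS.
elim: x HS => [|c x IH] //= HS /andP [Hc Hx].
move: HS; case: ifP => Hc0 HS.
  by congr cons; [rewrite tau0 //; apply/eqP | exact: IH].
by move: Hc; rewrite Hc0 HS.
Qed.

Lemma Hf_size x : size (Hf x) = size x.
Proof. by rewrite /Hf; case: ifP; rewrite ?size_map. Qed.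

Lemma Hgen (x y : seq 'I_5) : adj (R := carpet) x y -> sideR x = sideR y -> adjeq (R := carpet) (Hf x) (Hf y).
Proof.
move=> Hxy; rewrite /Hf => ->; case: ifP => _; last by rewrite /adjeq Hxy orbT.
exact: tau_map_mapping.
Qed.

Lemma Hfixcase (x y : seq 'I_5) : adj (R := carpet) x y -> map tau y = y -> adjeq (R := carpet) (Hf x) (Hf y).
Proof.
move=> Hxy Hy.
have -> : Hf y = y by case: (Hf_cases y) => ->.
case: (Hf_cases x) => ->; first by rewrite /adjeq Hxy orbT.
by have := tau_map_mapping Hxy; rewrite Hy.
Qed.

Lemma Hswap (x y : seq 'I_5) : adj (R := carpet) x y -> map tau x = y -> adjeq (R := carpet) (Hf x) (Hf y).
Proof.
move=> Hxy Hx.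
have Hy : map tau y = x by rewrite -Hx tauK.
case: (Hf_cases x) => ->; case: (Hf_cases y) => ->; rewrite ?Hx ?Hy /adjeq ?eqxx //.
- by rewrite Hxy orbT.
- by rewrite adjC Hxy orbT.
Qed.

Lemma chk0 : fa (fun t : 'I_5 => fa (fun c : 'I_5 => fa (fun d : 'I_5 =>
  (val t == 0) ==> carpet_I t c d ==> (val c <= 2)))).
Proof. by vm_compute. Qed.
Lemma chk2 : fa (fun t : 'I_5 => fa (fun c : 'I_5 => fa (fun d : 'I_5 =>
  (val t == 2) ==> carpet_I t c d ==> (c == tau d)))).
Proof. by vm_compute. Qed.
Lemma chk4 : fa (fun t : 'I_5 => fa (fun c : 'I_5 => fa (fun d : 'I_5 =>
  (val t == 4) ==> carpet_I t c d ==> (3 <= val d)))).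
Proof. by vm_compute. Qed.

Lemma fa3 (P : 'I_5 -> 'I_5 -> 'I_5 -> bool) :
  fa (fun t => fa (fun c => fa (fun d => P t c d))) -> forall t c d, P t c d.
Proof. by move=> H t c d; exact: (faP (faP (faP H t) c) d). Qed.

Lemma Hf_cons0 (a : 'I_5) u : val a == 0 -> Hf (a :: u) = a :: Hf u.
Proof.
move=> Ha; rewrite /Hf /= Ha; case: ifP => // _ /=.
by rewrite tau0 //; apply/eqP.
Qed.

Lemma Hf_mapping : mapping (R := carpet) Hf.
Proof.
apply: mapping_oriented.
elim=> [|a u IH] [|b v] //=; rewrite ?etype_nil_r ?eqxx //.
move=> H; have Hadj : adj (R := carpet) (a :: u) (b :: v) by rewrite /adj H.
have [Eab|Hab] := eqVneq a b.
  subst b; case Ha0: (val a == 0).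
    rewrite !Hf_cons0 // adjeq_cons; last exact: carpet_irrefl.
    apply: IH; rewrite G1 in H => //; exact: (faP carpet_irrefl).
  by apply: Hgen => //=; rewrite Ha0.
move: H; rewrite G2 //; case: ifP => // /andP [HE HI] _.
move: HE HI; rewrite /= /carpet_E /carpet_typ => /eqP HE HI.
case: a Hab HE HI Hadj => [[|[|[|[|[|k]]]]] Ha] //= Hab HE HI Hadj.
- apply: Hgen => //=; rewrite HE /=; apply: sideR_low.
  apply: (all2_allL HI) => c d Hcd.
  by move/implyP: (fa3 chk0 (Ordinal Ha) c d) => /(_ isT) /implyP; apply.
- by apply: Hgen => //=; rewrite HE.
- rewrite adjeqC; apply: Hswap; first by rewrite adjC.
  rewrite /=; congr cons; first by apply: val_inj; rewrite /= HE.
  rewrite -[RHS]map_id; apply: esym; apply: (all2_map_eq HI) => c d Hcd.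
  by apply/eqP; move/implyP: (fa3 chk2 (Ordinal Ha) c d) => /(_ isT) /implyP; apply.
- by apply: Hgen => //=; rewrite HE.
- case: v HI Hadj => [|c v] HI Hadj.
    by apply: Hfixcase => //=; rewrite tau0.
  apply: Hgen => //=; rewrite HE /=.
  have := all2_allR (P := fun d : 'I_5 => 3 <= val d) HI.
  case/(_ _)/andP.
    move=> x y Hxy.
    by move/implyP: (fa3 chk4 (Ordinal Ha) x y) => /(_ isT) /implyP; apply.
  move=> Hc _; have Hc0 : (\val c == 0) = false by case: (\val c) Hc.
  by rewrite Hc0 Hc.
Qed.

Definition o0 : 'I_5 := Ordinal (isT : 0 < 5).
Definition pia (a : 'I_5) : 'I_5 -> 'I_5 :=
  match val a with 0 => cadd o0 | 1 => cneg 1 | 2 => cadd (Ordinal (isT : 3 < 5))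
  | 3 => cneg 3 | _ => cneg 4 end.
Definition psi0 (a : 'I_5) (u : seq 'I_5) : seq 'I_5 :=
  if val a == 3 then Hf (map (pia a) u) else map (pia a) u.
Definition psiC (s a : 'I_5) (u : seq 'I_5) : seq 'I_5 :=
  map (cadd s) (psi0 (cadd (cinv s) a) (map (cadd (cinv s)) u)).

Lemma pia_good : fa (fun a => good (R := carpet) (pia a)).
Proof. by vm_compute. Qed.
Lemma cadd_good : fa (fun a => good (R := carpet) (cadd a)).
Proof. by vm_compute. Qed.

Lemma psi0_mapping a : mapping (R := carpet) (psi0 a).
Proof.
have Hp : mapping (R := carpet) (map (pia a)).
  exact: (@good_mapping carpet carpet_irrefl _ (faP pia_good a)).
rewrite /psi0; case: (val a == 3); last exact: Hp.
exact: (mapping_comp Hp Hf_mapping).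
Qed.

Lemma psiC_mapping s a : mapping (R := carpet) (psiC s a).
Proof.
have H1 : mapping (R := carpet) (map (cadd (cinv s))).
  exact: (@good_mapping carpet carpet_irrefl _ (faP cadd_good _)).
have H2 : mapping (R := carpet) (map (cadd s)).
  exact: (@good_mapping carpet carpet_irrefl _ (faP cadd_good _)).
exact: (mapping_comp (mapping_comp H1 (psi0_mapping _)) H2).
Qed.

Lemma psiC_size s a u : size (psiC s a u) = size u.
Proof. by rewrite /psiC /psi0 size_map; case: ifP; rewrite ?Hf_size !size_map. Qed.

Lemma id_chk : fa (fun s => fa (fun c =>
  (val (cadd (cinv s) s) != 3) && (cadd s (pia (cadd (cinv s) s) (cadd (cinv s) c)) == c))).
Proof. by vm_compute. Qed.

Lemma psiC_id s u : psiC s s u = u.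
Proof.
have H3 : (val (cadd (cinv s) s) == 3) = false.
  by apply/negbTE; case/andP: (faP (faP id_chk s) o0).
rewrite /psiC /psi0 H3 -!map_comp -[RHS]map_id; apply: eq_map => c /=.
by case/andP: (faP (faP id_chk s) c) => _ /eqP.
Qed.

Definition ck (a b c d : 'I_5) : bool :=
  carpet_E a b ==> carpet_I a c d ==>
   if val a == 3 then [&& val b != 3, (val (pia a c) == 0) || (3 <= val (pia a c))
                        & tau (pia a c) == pia b d]
   else if val b == 3 then (val (pia b d) <= 2) && (pia a c == pia b d)
   else pia a c == pia b d.

Lemma ck_chk : fa (fun a => fa (fun b => fa (fun c => fa (fun d => ck a b c d)))).
Proof. by vm_compute. Qed.

Lemma ckP a b c d : carpet_E a b -> carpet_I a c d ->
   if val a == 3 then [&& val b != 3, (val (pia a c) == 0) || (3 <= val (pia a c))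
                        & tau (pia a c) == pia b d]
   else if val b == 3 then (val (pia b d) <= 2) && (pia a c == pia b d)
   else pia a c == pia b d.
Proof.
move=> HE HI; have := faP (faP (faP (faP ck_chk a) b) c) d.
by rewrite /ck HE HI.
Qed.

Lemma psi0_cross a b u v : carpet_E a b -> all2 (carpet_I a) u v -> psi0 a u = psi0 b v.
Proof.
move=> HE HI; rewrite /psi0.
case Ha: (val a == 3).
  have Hb : (val b == 3) = false.
    by move: (HE); rewrite /carpet_E (eqP Ha) => /eqP ->.
  rewrite Hb Htau.
    rewrite -map_comp; apply: (all2_map_eq HI) => c d Hcd.
    by have := ckP HE Hcd; rewrite Ha => /and3P [_ _ /eqP].
  rewrite all_map; apply: (all2_allL HI) => c d Hcd /=.
  by have := ckP HE Hcd; rewrite Ha => /and3P [].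
case Hb: (val b == 3).
  rewrite Hfix.
    apply: (all2_map_eq HI) => c d Hcd.
    by have := ckP HE Hcd; rewrite Ha Hb => /andP [_ /eqP].
  rewrite all_map; apply: (all2_allR HI) => c d Hcd /=.
  by have := ckP HE Hcd; rewrite Ha Hb => /andP [].
apply: (all2_map_eq HI) => c d Hcd.
by have := ckP HE Hcd; rewrite Ha Hb => /eqP.
Qed.

Lemma rot_chk : fa (fun s => fa (fun a => fa (fun b => fa (fun c => fa (fun d =>
  carpet_E a b ==> (carpet_E (cadd (cinv s) a) (cadd (cinv s) b) &&
     (carpet_I a c d ==> carpet_I (cadd (cinv s) a) (cadd (cinv s) c) (cadd (cinv s) d)))))))).
Proof. by vm_compute. Qed.

Lemma psiC_cross s : cross (R := carpet) (psiC s).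
Proof.
move=> a b u v HE HI.
have H := fun c d => faP (faP (faP (faP (faP rot_chk s) a) b) c) d.
move: HE HI; rewrite /= /carpet_typ => HE HI.
rewrite /adjeq /psiC (@psi0_cross _ (cadd (cinv s) b) _ (map (cadd (cinv s)) v)) ?eqxx //.
  by move/implyP: (H o0 o0) => /(_ HE) /andP [].
apply: (all2_map HI) => c d Hcd.
by move/implyP: (H c d) => /(_ HE) /andP [_ /implyP]; apply.
Qed.

Lemma carpet_main (n m : nat) (wt : m.-tuple 'I_(igs_k carpet)) :
  exists phi : vert (Gm carpet (n + m)) -> vert (induced (prefix_set (n + m) n wt)),
    is_folding phi.
Proof.
apply: (@main_generic carpet carpet_irrefl psiC).
- exact: psiC_mapping.
- exact: psiC_cross.
- exact: psiC_size.
- exact: psiC_id.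
Qed.


Unset Implicit Arguments.

Theorem proposition4p10 (R : igs) (HR : R = gasket \/ R = carpet) (n m : nat)
    (Hm : 0 < m) (wt : m.-tuple 'I_(igs_k R)) :
  exists phi : vert (Gm R (n + m)) -> vert (induced (prefix_set (n + m) n wt)),
    is_folding phi.
Proof.
case: HR => HR; subst R; [exact: gasket_main | exact: carpet_main].
Qed.
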